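(* Let $\tilde\nu$ be a probability measure on $\mathcal{C}_n$. Then there exists a product measure $\xi$ on $\mathcal{C}_n$ such that $$\mathrm{W}_1(\tilde\nu,\xi)\le\sqrt{n\,\mathrm{Tr}(\mathcal{H}(\tilde\nu))}.$$ Moreover, one may take $\xi$ to be the unique product measure whose center of mass lies at the point $\int_{\mathcal{C}_n}g_{\tilde\nu}(y)\,d\tilde\nu(y)$, which is equal to the center of mass of $\tilde\nu$.
   Context: $\mathcal{C}_n=\{-1,1\}^n$ with uniform probability measure $\mu$. For a probability measure $\nu$ on $\mathcal{C}_n$ with $f=\log\frac{d\nu}{d\mu}$, and $y\in\mathcal{C}_n$, $i\in[n]$, let $y_\pm$ agree with $y$ except the $i$-th coordinate equals $\pm1$; define $g_\nu(y)\in\mathbb{R}^n$ by $\langle g_\nu(y),e_i\rangle=\frac{e^{f(y_+)}-e^{f(y_-)}}{e^{f(y_+)}+e^{f(y_-)}}$ (taken to be $0$ if $\nu(y_+)=\nu(y_-)=0$). Define the matrix $\mathcal{H}(\nu)=\int g_\nu(y)^{\otimes2}d\nu(y)-\left(\int g_\nu(y)\,d\nu(y)\right)^{\otimes2}$, the covariance matrix of $g_\nu(X)$, $X\sim\nu$. $\mathrm{W}_1$ is the Wasserstein distance with respect to Hamming distance; a product measure is the law of a vector with independent coordinates. *)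

(* Defs.v *)
From mathcomp Require Import all_boot all_order all_algebra.
From mathcomp Require Import classical_sets reals.
Set Implicit Arguments. Unset Strict Implicit. Unset Printing Implicit Defensive.
Import Order.TTheory GRing.Theory Num.Theory.
Local Open Scope ring_scope.

(* The discrete cube C_n = {-1,1}^n, a point is encoded by its sign pattern
   (true <-> +1, false <-> -1). *)
Definition cube (n : nat) := {ffun 'I_n -> bool}.

Section Cube.
Variables (R : realType) (n : nat).

Definition spin (x : cube n) (i : 'I_n) : R := if x i then 1 else -1.

Definition is_prob (nu : {ffun cube n -> R}) : Prop :=
  (forall x, 0 <= nu x) /\ \sum_(x : cube n) nu x = 1.

Definition setc (y : cube n) (i : 'I_n) (b : bool) : cube n :=
  [ffun j => if j == i then b else y j].

(* g_nu(y)_i = (e^{f(y+)} - e^{f(y-)}) / (e^{f(y+)} + e^{f(y-)}), f = log dnu/dmu.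
   Since mu is uniform, e^{f(z)} = 2^n nu(z) and the factor 2^n cancels;
   the value is 0 when nu(y+) = nu(y-) = 0. *)
Definition gvec (nu : {ffun cube n -> R}) (y : cube n) (i : 'I_n) : R :=
  let a := nu (setc y i true) in let b := nu (setc y i false) in
  if a + b == 0 then 0 else (a - b) / (a + b).

Definition integ (nu : {ffun cube n -> R}) (h : cube n -> R) : R :=
  \sum_(x : cube n) nu x * h x.

Definition Hmx (nu : {ffun cube n -> R}) : 'M[R]_n :=
  \matrix_(i, j) (integ nu (fun y => gvec nu y i * gvec nu y j)
                  - integ nu (fun y => gvec nu y i) * integ nu (fun y => gvec nu y j)).

Definition center (nu : {ffun cube n -> R}) : 'I_n -> R :=
  fun i => integ nu (fun x => spin x i).

Definition marg (nu : {ffun cube n -> R}) (i : 'I_n) (b : bool) : R :=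
  \sum_(x : cube n | x i == b) nu x.

Definition is_product (nu : {ffun cube n -> R}) : Prop :=
  is_prob nu /\ forall x : cube n, nu x = \prod_(i < n) marg nu i (x i).

Definition hamming (x y : cube n) : R := #|[set i | x i != y i]|%:R.

Definition is_coupling (nu1 nu2 : {ffun cube n -> R})
    (pi : {ffun cube n * cube n -> R}) : Prop :=
  (forall z, 0 <= pi z) /\
  (forall x, \sum_(y : cube n) pi (x, y) = nu1 x) /\
  (forall y, \sum_(x : cube n) pi (x, y) = nu2 y).

Definition W1 (nu1 nu2 : {ffun cube n -> R}) : R :=
  inf [set c : R | exists pi, is_coupling nu1 nu2 pi /\
        c = \sum_(z : cube n * cube n) pi z * hamming z.1 z.2].

End Cube.

(* Main.v *)
Require Import Defs.
From mathcomp Require Import all_boot all_order all_algebra.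
From mathcomp Require Import classical_sets reals.
From mathcomp Require Import ring lra zify.
Set Implicit Arguments. Unset Strict Implicit. Unset Printing Implicit Defensive.
Import Order.TTheory GRing.Theory Num.Theory.
Local Open Scope ring_scope.

Section Aux.
Variables (R : realType) (n : nat).

Lemma setc_at (z : cube n) i b : setc z i b i = b.
Proof. by rewrite /setc ffunE eqxx. Qed.

Lemma setc_setc (z : cube n) i b c : setc (setc z i b) i c = setc z i c.
Proof. by apply/ffunP => j; rewrite !ffunE; case: (j == i). Qed.

Lemma setc_id (z : cube n) i : setc z i (z i) = z.
Proof. by apply/ffunP => j; rewrite !ffunE; case: eqP => [->|]. Qed.

Lemma flip_sum (h : cube n -> R) i :
  \sum_(z : cube n) h z = \sum_(z : cube n) (if z i then h (setc z i true) + h (setc z i false) else 0).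
Proof.
have -> : \sum_(z : cube n) h z = \sum_(z : cube n) (if z i then h z else 0) + \sum_(z : cube n) (if z i then 0 else h z).
  rewrite -big_split; apply: eq_bigr => z _ /=. case: (z i) => /=. by rewrite addr0. by rewrite add0r.
pose fl (z : cube n) := setc z i (~~ z i).
have flK : involutive fl.
  by move=> z; rewrite /fl setc_setc setc_at negbK setc_id.
rewrite [X in _ + X](reindex_inj (inv_inj flK)) -big_split.
apply: eq_bigr => z _; rewrite /fl setc_at.
case Hz: (z i) => /=.
  by rewrite -{1}Hz setc_id.
by rewrite addr0.
Qed.

Lemma sum_prod (F : 'I_n -> bool -> R) :
  \sum_(y : cube n) \prod_j F j (y j) = \prod_j (F j true + F j false).
Proof.
transitivity (\prod_j \sum_(c : bool) F j c).
  by rewrite bigA_distr_bigA.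
by apply: eq_bigr => j _; rewrite big_bool.
Qed.


Lemma sum_prod_sel (F : 'I_n -> bool -> R) i (G : bool -> R) :
  (forall j, j != i -> F j true + F j false = 1) ->
  \sum_(y : cube n) (\prod_j F j (y j)) * G (y i) = F i true * G true + F i false * G false.
Proof.
move=> HF.
pose H j c := if j == i then F j c * G c else F j c.
transitivity (\sum_(y : cube n) \prod_j H j (y j)).
  apply: eq_bigr => y _; rewrite (bigD1 i) //= [in RHS](bigD1 i) //= /H eqxx.
  rewrite mulrAC; congr (_ * _); apply: eq_bigr => j /negbTE ->; done.
rewrite sum_prod (bigD1 i) //= /H eqxx big1 ?mulr1 // => j /[dup] ji /negbTE ->.
exact: HF.
Qed.

End Aux.

Section Nu.
Variables (R : realType) (n : nat) (nu : {ffun cube n -> R}).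
Hypothesis nu0 : forall x, 0 <= nu x.

Lemma gvec_setc y i b : gvec nu (setc y i b) i = gvec nu y i.
Proof. by rewrite /gvec !setc_setc. Qed.

Lemma g_pair i (F : cube n -> R) :
  (forall z b, F (setc z i b) = F z) ->
  \sum_(z : cube n) nu z * F z * gvec nu z i = \sum_(z : cube n) nu z * F z * spin R z i.
Proof.
move=> HF; rewrite (flip_sum _ i) [RHS](flip_sum _ i).
apply: eq_bigr => z _; case: (z i) => //.
rewrite !HF !gvec_setc /spin !setc_at.
set a := nu (setc z i true); set b := nu (setc z i false).
have H : (a + b) * gvec nu z i = a - b.
  rewrite /gvec -/a -/b; case: eqP => [ab0|/eqP ab0].
    have a0 : 0 <= a by apply: nu0.
    have b0 : 0 <= b by apply: nu0.
    rewrite mulr0; lra.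
  by rewrite mulrC divfK.
transitivity (F z * ((a + b) * gvec nu z i)); first ring.
rewrite H; ring.
Qed.


Definition cls (k : cube n -> cube n) x := \sum_(z : cube n | k z == k x) nu z.

Lemma nu_le_cls k x : nu x <= cls k x.
Proof.
rewrite /cls (bigD1 x) //= lerDl; apply: sumr_ge0 => z _; exact: nu0.
Qed.

Lemma tower (k : cube n -> cube n) (h : cube n -> R) :
  \sum_(x : cube n) nu x * ((\sum_(z : cube n | k z == k x) nu z * h z) / cls k x)
  = \sum_(x : cube n) nu x * h x.
Proof.
transitivity (\sum_(x : cube n) \sum_(z : cube n)
   (if k z == k x then nu x * (nu z * h z) / cls k x else 0)).
  apply: eq_bigr => x _; rewrite big_mkcond mulrA mulr_sumr mulr_suml.
  apply: eq_bigr => z _; case: ifP => _; [done | by rewrite mulr0 mul0r].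
rewrite (@exchange_big _ _ _ (cube n) (cube n)); apply: eq_bigr => z _.
transitivity (\sum_(x : cube n | k x == k z) nu x * (nu z * h z) / cls k z).
  rewrite [RHS]big_mkcond; apply: eq_bigr => x _; rewrite eq_sym.
  case: eqP => // e; by rewrite /cls e.
rewrite -mulr_suml -/(cls k z).
have [c0|c0] := eqVneq (cls k z) 0.
  have : nu z <= 0 by rewrite -c0 nu_le_cls.
  have := nu0 z => ? ?; have -> : nu z = 0 by lra.
  by rewrite c0 invr0 !mulr0 mul0r.
by rewrite -mulr_suml -/(cls k z) mulrAC divff // mul1r.
Qed.

End Nu.

Section Q.
Variable R : realType.

Definition Qk (A B p : R) (c b : bool) : R :=
  if p * (A + B) <= A then
    (if c then (if b then p * (A + B) / A else 1 - p * (A + B) / A)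
     else (if b then 0 else 1))
  else (if c then (if b then 1 else 0)
     else (if b then (p * (A + B) - A) / B else 1 - (p * (A + B) - A) / B)).

Definition pb (p : R) (b : bool) : R := if b then p else 1 - p.

Variables (A B p : R).
Hypotheses (A0 : 0 <= A) (B0 : 0 <= B) (p0 : 0 <= p) (p1 : p <= 1).

Lemma pP0 : 0 <= p * (A + B).
Proof. apply: mulr_ge0 => //; exact: addr_ge0. Qed.

Lemma pPle : p * (A + B) <= A + B.
Proof.
have a0 := A0; have b0 := B0; have q0 := p0; have q1 := p1.
rewrite -subr_ge0; have -> : A + B - p * (A + B) = (1 - p) * (A + B) by ring.
by apply: mulr_ge0; lra.
Qed.

Lemma divA (x : R) : x <= A -> 0 <= x -> A * (x / A) = x.
Proof.
have a0 := A0; have b0 := B0; have q0 := p0; have q1 := p1.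
move=> xA x0; have [A00|A0'] := eqVneq A 0; last by rewrite mulrC divfK.
rewrite A00 mul0r; lra.
Qed.

Lemma Q_ge0 c b : 0 <= Qk A B p c b.
Proof.
have a0 := A0; have b0 := B0; have q0 := p0; have q1 := p1.
have h1 := pP0; have h2 := pPle.
rewrite /Qk; case: ifP => hle; case: c; case: b => //; rewrite ?subr_ge0.
- by apply: divr_ge0.
- have [->|A0'] := eqVneq A 0; first by rewrite invr0 mulr0.
  by rewrite ler_pdivrMr ?mul1r // lt_def A0' A0.
- move/negbT: hle; rewrite -ltNge => hlt.
  apply: divr_ge0; lra.
- move/negbT: hle; rewrite -ltNge => hlt.
  have Bp : 0 < B by lra.
  rewrite ler_pdivrMr // mul1r; lra.
Qed.

Lemma Q_sum c : Qk A B p c true + Qk A B p c false = 1.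
Proof.
by rewrite /Qk; case: ifP; case: c; rewrite ?addr0 ?add0r // subrKC. Qed.

Lemma Q_mix b : A * Qk A B p true b + B * Qk A B p false b = (A + B) * pb p b.
Proof.
have a0 := A0; have b0 := B0; have q0 := p0; have q1 := p1.
have h1 := pP0; have h2 := pPle.
rewrite /Qk /pb; case: ifP => hle; case: b.
- by rewrite divA // mulr0 addr0 mulrC.
- rewrite mulrBr divA // !mulr1; ring.
- move/negbT: hle; rewrite -ltNge => hlt.
  have Bp : B != 0 by apply/eqP => B00; lra.
  rewrite mulr1 [B * _]mulrC divfK //; ring.
- move/negbT: hle; rewrite -ltNge => hlt.
  have Bp : B != 0 by apply/eqP => B00; lra.
  rewrite mulr0 add0r mulrBr mulr1 [B * _]mulrC divfK //; ring.
Qed.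

Lemma Q_cost : A * Qk A B p true false + B * Qk A B p false true = `|A - p * (A + B)|.
Proof.
have a0 := A0; have b0 := B0; have q0 := p0; have q1 := p1.
have h1 := pP0; have h2 := pPle.
rewrite /Qk; case: ifP => hle.
- rewrite mulr0 addr0 mulrBr divA // mulr1 ger0_norm //; lra.
- move/negbT: hle; rewrite -ltNge => hlt.
  have Bp : B != 0 by apply/eqP => B00; lra.
  rewrite mulr0 add0r [B * _]mulrC divfK // ler0_norm; lra.
Qed.

End Q.

Section Main.
Variables (R : realType) (n : nat) (nu xi : {ffun cube n -> R}).
Hypothesis nu0 : forall x, 0 <= nu x.
Hypothesis nu1 : \sum_x nu x = 1.
Hypothesis xiP : is_product xi.

Definition key (i : 'I_n) (x : cube n) : cube n := [ffun j : 'I_n => (j < i)%N && x j].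
Definition Aq i x := \sum_(z : cube n | (key i z == key i x) && z i) nu z.
Definition Bq i x := \sum_(z : cube n | (key i z == key i x) && ~~ z i) nu z.
Definition pt i := marg xi i true.
Definition q i (x : cube n) b := Qk (Aq i x) (Bq i x) (pt i) (x i) b.
Definition cpl : {ffun cube n * cube n -> R} :=
  [ffun z : cube n * cube n => nu z.1 * \prod_i q i z.1 (z.2 i)].

Lemma marg_sum (mu : {ffun cube n -> R}) i :
  marg mu i true + marg mu i false = \sum_x mu x.
Proof.
rewrite [RHS](bigID (fun x : cube n => x i)) /marg; congr (_ + _); apply: eq_bigl => x.
  by rewrite eqb_id.
by rewrite eqbF_neg.
Qed.

Lemma marg_ge0 (mu : {ffun cube n -> R}) i b : (forall x, 0 <= mu x) -> 0 <= marg mu i b.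
Proof. by move=> h; apply: sumr_ge0 => x _. Qed.

Lemma pt_ge0 i : 0 <= pt i.
Proof. by apply: marg_ge0; case: xiP => [[]]. Qed.

Lemma pt_le1 i : pt i <= 1.
Proof.
have := marg_sum xi i; case: xiP => [[h0 ->]] _.
have := marg_ge0 i false h0; rewrite /pt; lra.
Qed.

Lemma xi_pb y : xi y = \prod_i pb (pt i) (y i).
Proof.
case: xiP => [[h0 h1]] ->; apply: eq_bigr => i _; rewrite /pb /pt.
case: (y i) => //; have := marg_sum xi i; rewrite h1; lra.
Qed.

Lemma cls_AB i x : cls nu (key i) x = Aq i x + Bq i x.
Proof. by rewrite /cls (bigID (fun z : cube n => z i)). Qed.

Lemma key_setc i z b : key i (setc z i b) = key i z.
Proof.
apply/ffunP => j; rewrite !ffunE; case: eqP => [->|//]; by rewrite ltnn.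
Qed.

Lemma key_le (i k : 'I_n) z x : (i <= k)%N -> key k z = key k x -> key i z = key i x.
Proof.
move=> ik /ffunP e; apply/ffunP => j; rewrite !ffunE.
have := e j; rewrite !ffunE.
case: (ltnP j i) => //= ji; have -> : (j < k)%N by lia.
done.
Qed.

Lemma key_at (i k : 'I_n) z x : (i < k)%N -> key k z = key k x -> z i = x i.
Proof. by move=> ik /ffunP /(_ i); rewrite !ffunE ik. Qed.

Lemma Aq_key i z x : key i z = key i x -> Aq i z = Aq i x.
Proof. by move=> e; rewrite /Aq e. Qed.
Lemma Bq_key i z x : key i z = key i x -> Bq i z = Bq i x.
Proof. by move=> e; rewrite /Bq e. Qed.

Lemma q_key (i k : 'I_n) z x b : (i < k)%N -> key k z = key k x -> q i z b = q i x b.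
Proof.
move=> ik e; rewrite /q (key_at ik e) (Aq_key (key_le (ltnW ik) e)).
by rewrite (Bq_key (key_le (ltnW ik) e)).
Qed.

Lemma Aq_ge0 i x : 0 <= Aq i x. Proof. by apply: sumr_ge0. Qed.
Lemma Bq_ge0 i x : 0 <= Bq i x. Proof. by apply: sumr_ge0. Qed.

Lemma q_ge0 i x b : 0 <= q i x b.
Proof. exact: Q_ge0 (Aq_ge0 _ _) (Bq_ge0 _ _) (pt_ge0 _) (pt_le1 _) _ _. Qed.

Lemma q_sum i x : q i x true + q i x false = 1.
Proof. exact: Q_sum. Qed.

Definition Qx i x c := Qk (Aq i x) (Bq i x) (pt i) c.

Lemma class_q i x (G : bool -> (bool -> R) -> R) :
  \sum_(z : cube n | key i z == key i x) nu z * G (z i) (q i z) =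
  Aq i x * G true (Qx i x true) + Bq i x * G false (Qx i x false).
Proof.
rewrite (bigID (fun z : cube n => z i)) /=; congr (_ + _).
  rewrite /Aq mulr_suml; apply: eq_bigr => z /andP[/eqP e zi] /=.
  by rewrite /q /Qx (Aq_key e) (Bq_key e) zi.
rewrite /Bq mulr_suml; apply: eq_bigr => z /andP[/eqP e /negbTE zi] /=.
by rewrite /q /Qx (Aq_key e) (Bq_key e) zi.
Qed.

Lemma tower_eq (k : cube n -> cube n) (h1 h2 : cube n -> R) :
  (forall x, \sum_(z : cube n | k z == k x) nu z * h1 z = \sum_(z : cube n | k z == k x) nu z * h2 z) ->
  \sum_x nu x * h1 x = \sum_x nu x * h2 x.
Proof.
move=> H; rewrite -(tower nu0 k h1) -(tower nu0 k h2).
by apply: eq_bigr => x _; rewrite H.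
Qed.

Lemma cpl_ge0 z : 0 <= cpl z.
Proof. rewrite ffunE; apply: mulr_ge0 => //; apply: prodr_ge0 => i _; exact: q_ge0. Qed.

Lemma cpl_marg1 x : \sum_y cpl (x, y) = nu x.
Proof.
under eq_bigr => y _ do rewrite ffunE /=.
rewrite -mulr_sumr (sum_prod (fun i b => q i x b)) big1 ?mulr1 // => i _; exact: q_sum.
Qed.

Definition Tk y k := \sum_(x : cube n) nu x *
  ((\prod_(i : 'I_n | (i < k)%N) q i x (y i)) * \prod_(i : 'I_n | ~~ (i < k)%N) pb (pt i) (y i)).

Lemma Tk_step y k (hk : (k < n)%N) : Tk y k.+1 = Tk y k.
Proof.
pose ik := Ordinal hk.
have e1 : forall F : 'I_n -> R, \prod_(i : 'I_n | (i < k.+1)%N) F i = F ik * \prod_(i : 'I_n | (i < k)%N) F i.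
  move=> F; rewrite (bigD1 ik) /=; last by [].
  congr (_ * _); apply: eq_bigl => i; rewrite -val_eqE /=; apply/idP/idP; lia.
have e2 : forall F : 'I_n -> R, \prod_(i : 'I_n | ~~ (i < k)%N) F i = F ik * \prod_(i : 'I_n | ~~ (i < k.+1)%N) F i.
  move=> F; rewrite (bigD1 ik) /=; last by rewrite ltnn.
  congr (_ * _); apply: eq_bigl => i; rewrite -val_eqE /=; apply/idP/idP; lia.
rewrite /Tk; apply: (tower_eq (k := key ik)) => x.
set Rest := \prod_(i : 'I_n | ~~ (i < k.+1)%N) pb (pt i) (y i).
rewrite e2.
have Fk : forall z, key ik z == key ik x -> \prod_(i : 'I_n | (i < k)%N) q i z (y i) = \prod_(i : 'I_n | (i < k)%N) q i x (y i).
  move=> z /eqP e; apply: eq_bigr => i ik'; exact: (q_key (k := ik)).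
transitivity (\sum_(z : cube n | key ik z == key ik x) nu z * (q ik z (y ik)) * (\prod_(i : 'I_n | (i < k)%N) q i x (y i) * Rest)).
  apply: eq_bigr => z zx; rewrite e1 (Fk z zx) /=; ring.
transitivity (\sum_(z : cube n | key ik z == key ik x) nu z * (pb (pt ik) (y ik)) * (\prod_(i : 'I_n | (i < k)%N) q i x (y i) * Rest)); last first.
  apply: eq_bigr => z zx /=; rewrite (Fk z zx) /Rest; ring.
rewrite -!mulr_suml; congr (_ * _).
rewrite (class_q ik x (fun _ f => f (y ik))) -/(cls nu (key ik) x) cls_AB.
exact: (Q_mix (Aq_ge0 _ _) (Bq_ge0 _ _) (pt_ge0 _) (pt_le1 _)).
Qed.

Lemma cpl_marg2 y : \sum_x cpl (x, y) = xi y.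
Proof.
have T0 : Tk y 0 = xi y.
  rewrite /Tk xi_pb; transitivity (\sum_x nu x * \prod_i pb (pt i) (y i)); last first.
    by rewrite -mulr_suml nu1 mul1r.
  apply: eq_bigr => x _.
  have -> : \prod_(i < n | (i < 0)%N) q i x (y i) = 1 by rewrite big_pred0.
  by rewrite mul1r; congr (_ * _); apply: eq_bigl => i.
have Tn : Tk y n = \sum_x cpl (x, y).
  rewrite /Tk; apply: eq_bigr => x _; rewrite ffunE /=.
  have -> : \prod_(i < n | ~~ (i < n)%N) pb (pt i) (y i) = 1 by rewrite big_pred0 // => i; rewrite ltn_ord.
  rewrite mulr1; congr (_ * _); apply: eq_bigl => i; by rewrite ltn_ord.
rewrite -Tn -T0.
have : forall k, (k <= n)%N -> Tk y k = Tk y 0.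
  elim=> // k IH hk; rewrite Tk_step //; exact: IH (ltnW hk).
by apply.
Qed.

Lemma hamming_sum (x y : cube n) : hamming R x y = \sum_i ((x i != y i)%:R : R).
Proof.
rewrite /hamming -sum1_card natr_sum big_mkcond /=; apply: eq_bigr => i _.
by rewrite inE; case: (x i != y i).
Qed.

Lemma cost_eq : \sum_(z : cube n * cube n) cpl z * hamming R z.1 z.2 =
  \sum_i \sum_(x : cube n) nu x * q i x (~~ x i).
Proof.
transitivity (\sum_(x : cube n) \sum_(y : cube n) cpl (x, y) * hamming R x y).
  by rewrite pair_bigA; apply: eq_bigr => -[x y] _.
rewrite (@exchange_big _ _ _ 'I_n (cube n)) /=; apply: eq_bigr => x _.
transitivity (nu x * \sum_i \sum_(y : cube n) (\prod_j q j x (y j)) * (x i != y i)%:R).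
  rewrite (@exchange_big _ _ _ 'I_n (cube n)) /= mulr_sumr; apply: eq_bigr => y _.
  by rewrite ffunE hamming_sum /= mulr_sumr mulr_sumr; apply: eq_bigr => i _; rewrite mulrA.
rewrite mulr_sumr; apply: eq_bigr => i _; congr (_ * _).
rewrite (@sum_prod_sel R n (fun j b => q j x b) i (fun c => (x i != c)%:R)); last by move=> j _; exact: q_sum.
by case: (x i); rewrite /= ?mulr0 ?mulr1 ?addr0 ?add0r.
Qed.

Lemma center_marg (mu : {ffun cube n -> R}) i :
  center mu i = marg mu i true - marg mu i false.
Proof.
rewrite /center /integ (bigID (fun x : cube n => x i)) /= /marg; congr (_ + _).
  by apply: eq_big => x; [rewrite eqb_id | move=> e; rewrite /spin e mulr1].
rewrite -sumrN; apply: eq_big => x; first by rewrite eqbF_neg.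
by move/negbTE => e; rewrite /spin e mulrN1.
Qed.

Lemma pt_center i : pt i = (1 + center xi i) / 2.
Proof.
rewrite center_marg; have := marg_sum xi i; case: xiP => [[_ ->]] _ h.
rewrite /pt; have -> : marg xi i false = 1 - marg xi i true by lra.
by field.
Qed.

Lemma class_sum_g i x :
  \sum_(z : cube n | key i z == key i x) nu z * gvec nu z i = Aq i x - Bq i x.
Proof.
pose F z : R := (key i z == key i x)%:R.
transitivity (\sum_(z : cube n) nu z * F z * gvec nu z i).
  rewrite big_mkcond; apply: eq_bigr => z _; rewrite /F.
  by case: (key i z == key i x); rewrite /= ?mulr1 ?mulr0 ?mul0r.
rewrite (g_pair nu0); last by move=> z b; rewrite /F key_setc.
rewrite (bigID (fun z : cube n => key i z == key i x)) /= [X in _ + X]big1; last first.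
  by move=> z /negbTE e; rewrite /F e mulr0 mul0r.
rewrite addr0 (bigID (fun z : cube n => z i)) /= /Aq /Bq -sumrN; congr (_ + _).
  by apply: eq_bigr => z /andP[e zi]; rewrite /F e /spin zi !mulr1.
by apply: eq_bigr => z /andP[e /negbTE zi]; rewrite /F e /spin zi mulr1 mulrN1.
Qed.

Lemma cost_i i : center xi i = integ nu (fun y => gvec nu y i) ->
  \sum_(x : cube n) nu x * q i x (~~ x i) <=
  (\sum_(x : cube n) nu x * `|gvec nu x i - integ nu (fun y => gvec nu y i)|) / 2.
Proof.
move=> Hc; set m := integ nu _.
rewrite -(tower nu0 (key i)) -(tower nu0 (key i) (fun x => `|gvec nu x i - m|)) mulr_suml.
apply: ler_sum => x _; rewrite -mulrA; apply: ler_wpM2l => //.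
rewrite mulrAC; apply: ler_wpM2r; first by rewrite invr_ge0 /cls; apply: sumr_ge0.
rewrite (class_q i x (fun c f => f (~~ c))) /=.
rewrite (Q_cost (Aq_ge0 _ _) (Bq_ge0 _ _) (pt_ge0 _) (pt_le1 _)).
have -> : Aq i x - pt i * (Aq i x + Bq i x) =
   (\sum_(z : cube n | key i z == key i x) nu z * (gvec nu z i - m)) / 2.
  under eq_bigr => z _ do rewrite mulrBr.
  rewrite sumrB class_sum_g -mulr_suml -/(cls nu (key i) x) cls_AB pt_center Hc.
  rewrite /m; by field.
rewrite normrM [`|2^-1|]ger0_norm ?invr_ge0 ?ler0n //; apply: ler_wpM2r; first by rewrite invr_ge0 ler0n.
apply: le_trans (ler_norm_sum _ _ _) _; apply: ler_sum => z _.
by rewrite normrM ger0_norm.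
Qed.

Lemma integ_lin (f g : cube n -> R) a b c :
  \sum_x nu x * (a * f x + b * g x + c) = a * (\sum_x nu x * f x) + b * (\sum_x nu x * g x) + c.
Proof.
transitivity (\sum_x (a * (nu x * f x) + b * (nu x * g x) + c * nu x)).
  by apply: eq_bigr => x _; ring.
by rewrite !big_split /= -!mulr_sumr nu1 mulr1.
Qed.

Lemma e_sq i : (\sum_x nu x * `|gvec nu x i - integ nu (fun y => gvec nu y i)|) ^+ 2 <= Hmx nu i i.
Proof.
set m := integ nu _; set e := \sum_x _.
have h0 : 0 <= \sum_x nu x * (`|gvec nu x i - m| - e) ^+ 2.
  by apply: sumr_ge0 => x _; apply: mulr_ge0 => //; apply: sqr_ge0.
have h1 : \sum_x nu x * (`|gvec nu x i - m| - e) ^+ 2 =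
   \sum_x nu x * (1 * (`|gvec nu x i - m| ^+ 2) + (- (2 * e)) * `|gvec nu x i - m| + e ^+ 2).
  by apply: eq_bigr => x _; congr (_ * _); ring.
rewrite h1 integ_lin -/e in h0.
have h2 : \sum_x nu x * `|gvec nu x i - m| ^+ 2 =
   \sum_x nu x * (1 * (gvec nu x i * gvec nu x i) + (- (2 * m)) * gvec nu x i + m ^+ 2).
  apply: eq_bigr => x _; rewrite real_normK ?num_real //; congr (_ * _); ring.
rewrite h2 integ_lin in h0.
rewrite /Hmx mxE.
have -> : integ nu (fun y => gvec nu y i * gvec nu y i) = \sum_x nu x * (gvec nu x i * gvec nu x i) by [].
have -> : integ nu (fun y => gvec nu y i) = m by [].
have em : \sum_x nu x * gvec nu x i = m by [].
rewrite em in h0.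
rewrite !expr2 in h0 *.
rewrite -subr_ge0; apply: (le_trans h0); rewrite le_eqVlt; apply/orP; left; apply/eqP; ring.
Qed.

End Main.

Lemma cs_sum (R : realType) n (e : 'I_n -> R) :
  (\sum_i e i) ^+ 2 <= n%:R * \sum_i e i ^+ 2.
Proof.
set s := \sum_i e i; set t := \sum_i e i ^+ 2.
have h0 : 0 <= \sum_i \sum_j (e i - e j) ^+ 2.
  by apply: sumr_ge0 => i _; apply: sumr_ge0 => j _; apply: sqr_ge0.
have h1 : \sum_i \sum_j (e i - e j) ^+ 2 = \sum_i (n%:R * e i ^+ 2 + t - 2 * e i * s).
  apply: eq_bigr => i _.
  transitivity (\sum_j (e i ^+ 2 + e j ^+ 2 - 2 * e i * e j)).
    by apply: eq_bigr => j _; ring.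
  rewrite sumrB big_split /= sumr_const card_ord.
  by rewrite -/t -mulr_sumr -/s mulr_natl -[e i ^+ 2 *+ n]mulr_natl.
have p1 : \sum_i (n%:R * e i ^+ 2 + t - 2 * e i * s) =
   \sum_i (n%:R * e i ^+ 2) + \sum_(i < n) t - \sum_i (2 * e i * s).
  by rewrite sumrB big_split.
have p2 : \sum_i (n%:R * e i ^+ 2) = n%:R * t by rewrite mulr_sumr.
have p3 : \sum_(i < n) t = n%:R * t by rewrite sumr_const card_ord mulr_natl.
have p4 : \sum_i (2 * e i * s) = 2 * s * s by rewrite -mulr_suml -mulr_sumr.
rewrite h1 p1 p2 p3 p4 in h0.
have E : n%:R * t + n%:R * t - 2 * s * s = 2 * (n%:R * t - s * s) by ring.
rewrite E pmulr_rge0 // in h0.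
rewrite expr2; lra.
Qed.

Unset Implicit Arguments.
Set Strict Implicit.

Theorem proposition3p5 (R : realType) (n : nat) (nu : {ffun cube n -> R}) :
  is_prob nu ->
  let m := fun i => integ nu (fun y => gvec nu y i) in
  (* the point m equals the center of mass of nu *)
  (forall i, m i = center nu i) /\
  (* there is a product measure with center of mass m, and it is unique *)
  (exists xi, is_product xi /\ forall i, center xi i = m i) /\
  (forall xi xi', is_product xi -> (forall i, center xi i = m i) ->
     is_product xi' -> (forall i, center xi' i = m i) -> xi = xi') /\
  (* that product measure satisfies the W1 bound *)
  (forall xi, is_product xi -> (forall i, center xi i = m i) ->
     W1 nu xi <= Num.sqrt (n%:R * \tr (Hmx nu))).
Proof.
move=> [nu0 nu1] m.
have part1 : forall i, m i = center nu i.
  move=> i; rewrite /m /integ /center /integ.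
  transitivity (\sum_z nu z * 1 * gvec nu z i).
    by apply: eq_bigr => z _; rewrite mulr1.
  rewrite (g_pair nu0 (F := fun _ => 1)) //.
  by apply: eq_bigr => z _; rewrite mulr1.
have mb : forall i, -1 <= m i <= 1.
  move=> i; rewrite -ler_norml part1 /center /integ -nu1.
  apply: le_trans (ler_norm_sum _ _ _) _; apply: ler_sum => x _.
  rewrite normrM ger0_norm // /spin; case: (x i); rewrite ?normrN normr1 mulr1 //.
split=> //; split.
  pose r i := (1 + m i) / 2.
  have r01 : forall i, 0 <= r i <= 1.
    move=> i; have := mb i; rewrite /r => /andP[h1 h2]; apply/andP; split; lra.
  have pb0 : forall i c, 0 <= pb (r i) c.
    move=> i c; have := r01 i => /andP[h1 h2]; rewrite /pb; case: c; lra.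
  have pbs : forall i, pb (r i) true + pb (r i) false = 1.
    by move=> i; rewrite /pb addrC subrK.
  pose xi0 : {ffun cube n -> R} := [ffun y : cube n => \prod_i pb (r i) (y i)].
  have mx : forall i b, marg xi0 i b = pb (r i) b.
    move=> i b; rewrite /marg big_mkcond /=.
    transitivity (\sum_(y : cube n) (\prod_j pb (r j) (y j)) * (y i == b)%:R).
      by apply: eq_bigr => y _; rewrite ffunE; case: (y i == b); rewrite ?mulr1 ?mulr0.
    rewrite (@sum_prod_sel R n (fun j c => pb (r j) c) i (fun c => (c == b)%:R)); last first.
      by move=> j _; exact: pbs.
    by case: b; rewrite /= ?mulr1 ?mulr0 ?addr0 ?add0r.
  exists xi0; split.
    split; last by move=> x; rewrite ffunE; apply: eq_bigr => i _; rewrite mx.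
    split; first by move=> x; rewrite ffunE; apply: prodr_ge0 => i _; exact: pb0.
    under eq_bigr => x _ do rewrite ffunE.
    by rewrite (@sum_prod R n (fun j c => pb (r j) c)) big1.
  move=> i; rewrite center_marg !mx /pb /r; by field.
split.
  move=> xi xi' xP Hc xP' Hc'; apply/ffunP => y.
  rewrite (xi_pb xP) (xi_pb xP'); apply: eq_bigr => i _.
  by rewrite (pt_center xP) (pt_center xP') Hc Hc'.
move=> xi xP Hc.
pose e i := \sum_x nu x * `|gvec nu x i - m i|.
have cost_le : \sum_(z : cube n * cube n) cpl nu xi z * hamming R z.1 z.2 <=
    Num.sqrt (n%:R * \tr (Hmx nu)).
  rewrite cost_eq; apply: (@le_trans _ _ (\sum_i e i / 2)).
    apply: ler_sum => i _; exact: (cost_i nu0 xP (Hc i)).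
  rewrite -mulr_suml.
  have s0 : 0 <= (\sum_i e i) / 2.
    apply: divr_ge0 => //; apply: sumr_ge0 => i _; apply: sumr_ge0 => x _.
    exact: mulr_ge0.
  rewrite -(ger0_norm s0) -sqrtr_sqr; apply: ler_wsqrtr.
  apply: (@le_trans _ _ ((\sum_i e i) ^+ 2)).
    rewrite expr_div_n ler_pdivrMr ?exprn_gt0 // ler_peMr ?sqr_ge0 //.
    by rewrite expr2 (_ : 1 = 1%:R) // -natrM ler_nat.
  apply: le_trans (cs_sum e) _; apply: ler_wpM2l => //.
  rewrite /mxtrace; apply: ler_sum => i _; exact: e_sq.
rewrite /W1; apply: le_trans cost_le; apply: ge_inf.
  exists 0 => c [pi [[pi0 _] ->]]; apply: sumr_ge0 => z _.
  by apply: mulr_ge0 => //; rewrite /hamming ler0n.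
exists (cpl nu xi); split => //; split; first exact: cpl_ge0.
split; first exact: cpl_marg1.
exact: cpl_marg2.
Qed.
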